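(* Let $n\ge 1$ and $u,v\in\mathsf{Tr}(n)$. Let $s:=\min(u_1,v_1)\cdots\min(u_n,v_n)$ and let $t$ be the word obtained from $s$ by replacing, for every pair of indices $i<j$ with $s_i=0$ and $s_j=1$, the letter $s_j$ by $0$ (i.e. changing every subword $01$ of $s$ into $00$). Then $t$ is the meet of $u$ and $v$ in $(\mathsf{Tr}(n),\preccurlyeq)$.
   Context: A triword of size $n$ is a word $u=u_1\cdots u_n$ with $u_i\in\{0,1,2\}$, $u_1\ne 2$, and such that $u_i=0$ implies $u_j\neq 1$ for all $j>i$ (i.e. no subword $01$, where a subword is obtained by deleting letters); $\mathsf{Tr}(n)$ is their set, ordered componentwise: $u\preccurlyeq v$ iff $u_i\le v_i$ for all $i\in[n]$. *)

(* Defs.v *)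
From mathcomp Require Import all_boot.
Set Implicit Arguments. Unset Strict Implicit. Unset Printing Implicit Defensive.

(* Words are sequences of naturals; positions are 0-based (position i here
   is position i+1 in the paper). *)

Definition triword (n : nat) (u : seq nat) : Prop :=
  [/\ size u = n,
      (forall i, i < n -> nth 0 u i <= 2),
      (0 < n -> nth 0 u 0 != 2) &
      (forall i j, i < j -> j < n -> nth 0 u i = 0 -> nth 0 u j != 1)].

Definition word_le (n : nat) (u v : seq nat) : Prop :=
  forall i, i < n -> nth 0 u i <= nth 0 v i.

Definition word_min (u v : seq nat) : seq nat :=
  [seq minn p.1 p.2 | p <- zip u v].

Definition kill01 (s : seq nat) : seq nat :=
  [seq (if (nth 0 s j == 1) && has (fun i => nth 0 s i == 0) (iota 0 j)
        then 0 else nth 0 s j) | j <- iota 0 (size s)].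

Definition is_meet_Tr (n : nat) (u v m : seq nat) : Prop :=
  [/\ triword n m, word_le n m u, word_le n m v &
      forall w, triword n w -> word_le n w u -> word_le n w v -> word_le n w m].

(* Main.v *)
Require Import Defs.
From mathcomp Require Import all_boot.

Lemma nth_wm u v i : size u = size v -> i < size u ->
  nth 0 (word_min u v) i = minn (nth 0 u i) (nth 0 v i).
Proof.
move=> e lt; rewrite /word_min (nth_map (0,0)); last by rewrite size_zip -e minnn.
by rewrite nth_zip.
Qed.

Lemma nth_k s j : j < size s -> nth 0 (kill01 s) j =
  if (nth 0 s j == 1) && has (fun i => nth 0 s i == 0) (iota 0 j) then 0 else nth 0 s j.
Proof.
by move=> lt; rewrite /kill01 (nth_map 0) ?size_iota // nth_iota.
Qed.

Lemma hasiota (s : seq nat) j : has (fun i => nth 0 s i == 0) (iota 0 j) =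
  [exists i : 'I_j, nth 0 s i == 0].
Proof.
apply/hasP/existsP => [[x]|[x /eqP h]].
  rewrite mem_iota add0n => /andP[_ lt] /eqP h; by exists (Ordinal lt); apply/eqP.
by exists (val x); [rewrite mem_iota add0n ltn_ord | rewrite h].
Qed.

Theorem proposition1p5 (n : nat) (u v : seq nat) :
  1 <= n -> triword n u -> triword n v ->
  is_meet_Tr n u v (kill01 (word_min u v)).
Proof.
move=> n1 [su bu fu nu] [sv bv fv nv].
set s := word_min u v.
have ss : size s = n by rewrite /s /word_min size_map size_zip su sv minnn.
have hs : forall i, i < n -> nth 0 s i = minn (nth 0 u i) (nth 0 v i).
  by move=> i lt; rewrite nth_wm ?su ?sv.
have ht : forall j, j < n -> nth 0 (kill01 s) j =
  if (nth 0 s j == 1) && [exists i : 'I_j, nth 0 s i == 0] then 0 else nth 0 s j.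
  by move=> j lt; rewrite nth_k ?ss // hasiota.
have tles : forall j, j < n -> nth 0 (kill01 s) j <= nth 0 s j.
  by move=> j lt; rewrite ht //; case: ifP.
have sleu : forall j, j < n -> nth 0 s j <= nth 0 u j.
  by move=> j lt; rewrite hs // geq_minl.
have slev : forall j, j < n -> nth 0 s j <= nth 0 v j.
  by move=> j lt; rewrite hs // geq_minr.
split.
- split.
  + by rewrite /kill01 size_map size_iota.
  + by move=> i lt; apply: leq_trans (tles i lt) _; apply: leq_trans (sleu i lt) (bu i lt).
  + move=> lt; rewrite ht //.
    have : nth 0 u 0 <= 1.
      by have := bu 0 lt; have := fu lt; case: (nth 0 u 0) => [|[|[|]]].
    move=> h1; have h2 := leq_trans (sleu 0 lt) h1.
    case: ifP => // _; by case: (nth 0 s 0) h2 => [|[|]].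
  + move=> i j lij ljn; have lin := ltn_trans lij ljn.
    rewrite (ht i lin) (ht j ljn).
    case: ifP => [/andP[_ /existsP[k hk]]|_] ti.
      case: ifP => // /negbT; rewrite negb_and => /orP[->//|/existsPn/(_ (Ordinal (ltn_trans (ltn_ord k) lij)))].
      by rewrite hk.
    case: ifP => // /negbT; rewrite negb_and => /orP[->//|/existsPn/(_ (Ordinal lij))].
    by rewrite /= ti.
- by move=> i lt; apply: leq_trans (tles i lt) (sleu i lt).
- by move=> i lt; apply: leq_trans (tles i lt) (slev i lt).
- move=> w [sw bw fw nw] wu wv j lt.
  have wles : forall i, i < n -> nth 0 w i <= nth 0 s i.
    by move=> i li; rewrite hs // leq_min wu ?wv.
  rewrite ht //; case: ifP => [/andP[/eqP s1 /existsP[k /eqP hk]]|_]; last exact: wles.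
  have lk : k < n := ltn_trans (ltn_ord k) lt.
  have w0 : nth 0 w k = 0 by apply/eqP; have := wles k lk; rewrite hk leqn0.

  have := nw k j (ltn_ord k) lt w0.
  have := wles j lt; rewrite s1.
  by case: (nth 0 w j) => [|[|]].
Qed.
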